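(* Let $X$ be an $E\mathcal M$-simplicial set, let $x\in X_n$ be co-infinitely supported, let $u_0,\dots,u_n\in\mathcal M$, let $0\le k\le n$, and let $A\subset\omega$ be co-infinite such that $(u_0,\dots,u_n).x$ is $k$-supported on $u_k(A)$. Then $x$ is $k$-supported on $A$.
   Context: $\omega=\{1,2,\dots\}$, $\mathcal M$ the monoid of injections $\omega\to\omega$, $\mathcal M_A$ the submonoid fixing $A\subset\omega$ elementwise; $A$ co-infinite if $\omega\setminus A$ is infinite. $E\mathcal M$ is the simplicial monoid with $(E\mathcal M)_n=\mathcal M^{1+n}$, pointwise multiplication, structure maps by precomposition; an $E\mathcal M$-simplicial set is a simplicial set with left $E\mathcal M$-action. $x\in X_n$ is $k$-supported on $A$ if $i_k(g).x=x$ for all $g\in\mathcal M_A$, where $i_k\colon\mathcal M\to\mathcal M^{1+n}$ is the inclusion of the $(1+k)$-th factor. $x$ is co-infinitely supported if for every $0\le k\le n$ there exists a co-infinite $A_k$ on which $x$ is $k$-supported. *)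

(* Defs.v *)
From mathcomp Require Import all_boot.
Set Implicit Arguments. Unset Strict Implicit. Unset Printing Implicit Defensive.

(* omega is modelled by nat (a relabelling of {1,2,...}). *)

Record injM := InjMap { imap :> nat -> nat; imap_inj : injective imap }.

Definition inj_one : injM := @InjMap id (@inj_id nat).
Lemma inj_mul_proof (g h : injM) : injective (g \o h).
Proof. by move=> a b /= /imap_inj /imap_inj. Qed.
Definition inj_mul (g h : injM) : injM := @InjMap (g \o h) (@inj_mul_proof g h).

Definition subset_nat := nat -> Prop.
Definition co_infinite (A : subset_nat) : Prop :=
  forall N : nat, exists m : nat, N <= m /\ ~ A m.
Definition image_set (u : injM) (A : subset_nat) : subset_nat :=
  fun y => exists2 a, A a & y = u a.

Definition fixes (A : subset_nat) (g : injM) : Prop := forall a, A a -> g a = a.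

Record simplex_map (m n : nat) := SMap {
  smap :> 'I_m.+1 -> 'I_n.+1;
  smap_mono : forall i j : 'I_m.+1, i <= j -> smap i <= smap j }.

Record sSet := {
  sset_obj :> nat -> Type;
  sset_map : forall m n, simplex_map m n -> sset_obj n -> sset_obj m;
  sset_id : forall n (a : simplex_map n n), (forall i, a i = i) ->
    forall x, sset_map a x = x;
  sset_comp : forall l m n (a : simplex_map l m) (b : simplex_map m n)
    (c : simplex_map l n), (forall i, c i = b (a i)) ->
    forall x, sset_map c x = sset_map a (sset_map b x)
}.

(* (EM)_n = M^{1+n}, an element is a family 'I_n.+1 -> injM;
   multiplication pointwise, face/degeneracy maps by precomposition.
   An EM-simplicial set is a simplicial set with a left EM-action. *)
Record EMsSet := {
  em_sset :> sSet;
  em_act : forall n, ('I_n.+1 -> injM) -> em_sset n -> em_sset n;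
  em_act1 : forall n (x : em_sset n), em_act (fun _ => inj_one) x = x;
  em_actM : forall n (g h : 'I_n.+1 -> injM) (x : em_sset n),
    em_act g (em_act h x) = em_act (fun i => inj_mul (g i) (h i)) x;
  em_act_nat : forall m n (a : simplex_map m n) (g : 'I_n.+1 -> injM)
    (x : em_sset n),
    sset_map a (em_act g x) = em_act (fun i => g (a i)) (sset_map a x)
}.

Definition incl_k n (k : 'I_n.+1) (g : injM) : 'I_n.+1 -> injM :=
  fun i => if i == k then g else inj_one.

Definition k_supported (X : EMsSet) n (x : X n) (k : 'I_n.+1) (A : subset_nat) :=
  forall g : injM, fixes A g -> em_act (incl_k k g) x = x.

Definition co_inf_supported (X : EMsSet) n (x : X n) :=
  forall k : 'I_n.+1, exists A : subset_nat, co_infinite A /\ k_supported x k A.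

(* Main.v *)
From Stdlib Require Import Classical ClassicalEpsilon FunctionalExtensionality ProofIrrelevance.
Require Import Defs.
From mathcomp Require Import all_boot.
Set Implicit Arguments. Unset Strict Implicit. Unset Printing Implicit Defensive.

Definition inf (T : nat -> Prop) := forall N, exists m, N <= m /\ T m.

Definition asb (P : Prop) : bool :=
  if excluded_middle_informative P then true else false.
Lemma asbP P : reflect P (asb P).
Proof. rewrite /asb; case: excluded_middle_informative => h; constructor; done. Qed.

Section Enum.
Variable T : nat -> Prop.
Hypothesis hT : inf T.

Lemma next_ex b : exists m, (b <= m) && asb (T m).
Proof. have [m [h1 h2]] := hT b. exists m. by rewrite h1; apply/asbP. Qed.

Definition next b := ex_minn (next_ex b).

Lemma nextP b : [/\ b <= next b, T (next b) & forall t, T t -> b <= t -> next b <= t].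
Proof.
rewrite /next; case: ex_minnP => m /andP [h1 h2] hmin; split => //.
  exact/asbP.
move=> t Tt bt.
apply: hmin. rewrite bt; exact/asbP.
Qed.

Fixpoint en m := match m with 0 => next 0 | m'.+1 => next (en m').+1 end.

Lemma en_T m : T (en m).
Proof. case: m => [|m] /=; [by case: (nextP 0) | by case: (nextP (en m).+1)]. Qed.
Lemma en_lt m : en m < en m.+1.
Proof. rewrite /=; by case: (nextP (en m).+1). Qed.
Lemma en_mono i j : i < j -> en i < en j.
Proof.
elim: j => // j IH; rewrite ltnS leq_eqVlt => /orP [/eqP -> | h]; first exact: en_lt.
exact: ltn_trans (IH h) (en_lt j).
Qed.
Lemma en_inj : injective en.
Proof.
move=> i j h; case: (ltngtP i j) => // hij; move: (en_mono hij); by rewrite h ltnn.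
Qed.
Lemma en_ge m : m <= en m.
Proof. elim: m => // m IH. exact: leq_ltn_trans IH (en_lt m). Qed.
Lemma en_surj t : T t -> exists m, en m = t.
Proof.
move=> Tt.
suff: forall m, t <= en m -> exists j, en j = t by apply; apply: en_ge.
elim=> [|m IH] h.
  exists 0; apply/eqP; rewrite eqn_leq h /=. by case: (nextP 0) => _ _ ->.
case: (leqP t (en m)) => h2; first exact: IH.
exists m.+1; apply/eqP; rewrite eqn_leq h /=. by case: (nextP (en m).+1) => _ _ ->.
Qed.
End Enum.

Lemma inj_unbounded (h : nat -> nat) : injective h -> forall N, exists m, N <= h m.
Proof.
move=> hi N.
case: (excluded_middle_informative (exists m, N <= h m)) => // hn; exfalso.
have lt : forall m, h m < N.
  by move=> m; rewrite ltnNge; apply/negP => c; apply: hn; exists m.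
have sub : {subset map h (iota 0 N.+1) <= iota 0 N}.
  by move=> y /mapP [m _ ->]; rewrite mem_iota add0n lt.
have := uniq_leq_size _ sub.
by rewrite map_inj_uniq ?iota_uniq // size_map !size_iota ltnn => /(_ isT).
Qed.

Lemma image_coinf (u : injM) A : co_infinite A -> co_infinite (image_set u A).
Proof.
move=> hA N.
have hA' : inf (fun m => ~ A m) := hA.
have hi : injective (u \o en hA') := inj_comp (@imap_inj u) (@en_inj _ hA').
have [m hm] := inj_unbounded hi N. exists (u (en hA' m)); split => //.
case=> a Aa /imap_inj e. apply: (en_T hA' m). by rewrite e.
Qed.

Lemma injM_ext (f g : injM) : f =1 g -> f = g.
Proof.
case: f g => f hf [g hg] /= e. have E : f = g := functional_extensionality _ _ e.
subst g. by rewrite (proof_irrelevance _ hf hg).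
Qed.

Lemma act_ext (X : EMsSet) n (f g : 'I_n.+1 -> injM) (x : X n) :
  (forall i, f i =1 g i) -> em_act f x = em_act g x.
Proof. move=> h; have -> // : f = g. apply: functional_extensionality => i; exact: injM_ext. Qed.

Lemma bij_ext (S : subset_nat) (f : injM) : co_infinite S ->
  exists rho : injM, (forall s, S s -> rho s = f s) /\ forall y, exists z, rho z = y.
Proof.
move=> hS.
have hC : inf (fun m => ~ S m) := hS.
have hD : inf (fun m => ~ image_set f S m) := image_coinf f hS.
pose idx y := epsilon (inhabits 0) (fun m => en hC m = y).
have idxP : forall y, ~ S y -> en hC (idx y) = y.
  move=> y ny; apply: (epsilon_spec (inhabits 0) (fun m => en hC m = y)).
  exact: en_surj.
pose rho y := if asb (S y) then f y else en hD (idx y).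
have rinj : injective rho.
  move=> y1 y2; rewrite /rho.
  case: (asbP (S y1)) => h1; case: (asbP (S y2)) => h2.
  - exact: imap_inj.
  - move=> e; exfalso; apply: (en_T hD (idx y2)); rewrite -e; by exists y1.
  - move=> e; exfalso; apply: (en_T hD (idx y1)); rewrite e; by exists y2.
  - move/en_inj => e. by rewrite -(idxP _ h1) e idxP.
exists (InjMap rinj); split.
  by move=> s Ss /=; rewrite /rho; case: asbP.
move=> y /=.
case: (excluded_middle_informative (image_set f S y)) => [[s Ss ->]|ny].
  by exists s; rewrite /rho; case: asbP.
have [m hm] := en_surj hD ny.
exists (en hC m); rewrite /rho; case: asbP => h; first by exfalso; exact: (en_T hC m).
have : en hC (idx (en hC m)) = en hC m by apply: idxP.
by move/en_inj => ->.
Qed.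

Lemma factor (rho f : injM) : (forall y, exists z, rho z = y) ->
  exists tau : injM, forall y, rho (tau y) = f y.
Proof.
move=> hs.
pose tau y := epsilon (inhabits 0) (fun z => rho z = f y).
have tP : forall y, rho (tau y) = f y.
  move=> y; exact: (epsilon_spec (inhabits 0) (fun z => rho z = f y)).
have tinj : injective tau.
  by move=> a b e; apply: (@imap_inj f); rewrite -!tP e.
by exists (InjMap tinj).
Qed.

Lemma L_lemma (X : EMsSet) n (z : X n) k S : co_infinite S -> k_supported z k S ->
  forall f f' : injM, (forall s, S s -> f s = f' s) ->
  em_act (incl_k k f) z = em_act (incl_k k f') z.
Proof.
move=> hS hz f f' e.
have [rho [hr hsurj]] := bij_ext f hS.
have key : forall h : injM, (forall s, S s -> h s = rho s) ->
    em_act (incl_k k h) z = em_act (incl_k k rho) z.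
  move=> h hh.
  have [t ht] := factor h hsurj.
  have tfix : fixes S t.
    by move=> s Ss; apply: (@imap_inj rho); rewrite ht hh.
  transitivity (em_act (incl_k k rho) (em_act (incl_k k t) z)); last by rewrite hz.
  rewrite em_actM; apply: act_ext => i y /=; rewrite /incl_k.
  by case: (i == k) => /=.
rewrite (key f) ?(key f') // => s Ss; by rewrite hr // e.
Qed.

Lemma T1 (X : EMsSet) n (x : X n) (Bf : 'I_n.+1 -> subset_nat) (f : 'I_n.+1 -> injM) :
  (forall i, k_supported x i (Bf i)) -> (forall i, fixes (Bf i) (f i)) -> em_act f x = x.
Proof.
move=> hs hf.
suff H : forall j, j <= n.+1 -> em_act (fun i : 'I_n.+1 => if i < j then f i else inj_one) x = x.
  rewrite -{2}(H n.+1 (leqnn _)). apply: act_ext => i y. by rewrite ltn_ord.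
elim=> [|j IH] hj.
  rewrite -{2}(em_act1 x). by apply: act_ext.
pose J : 'I_n.+1 := Ordinal hj.
transitivity (em_act (incl_k J (f J))
   (em_act (fun i : 'I_n.+1 => if i < j then f i else inj_one) x)); last first.
  by rewrite IH ?(ltnW hj) //; apply: hs.
rewrite em_actM. apply: act_ext => i y /=; rewrite /incl_k.
case: (eqVneq i J) => [->|ne] /=.
  by rewrite ltnSn ltnn.
have nij : (i : nat) != j by apply: contra ne => /eqP h; apply/eqP/val_inj.
by rewrite ltnS leq_eqVlt (negbTE nij) /=.
Qed.

Lemma W_ex (u : injM) (D : subset_nat) (e : nat -> nat) : injective e ->
  (forall m, ~ D (e m)) ->
  exists w : injM, forall a, (D a -> w (u a) = a) /\ (~ D a -> w (u a) = e (2 * a)).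
Proof.
move=> ei eD.
pose pre y := epsilon (inhabits 0) (fun a => u a = y).
have preP : forall a, pre (u a) = a.
  move=> a; apply: (@imap_inj u).
  apply: (epsilon_spec (inhabits 0) (fun b => u b = u a)); by exists a.
pose w y := if asb (exists a, u a = y) then
   (if asb (D (pre y)) then pre y else e (2 * pre y)) else e (2 * y + 1).
have wu : forall a, w (u a) = if asb (D a) then a else e (2 * a).
  move=> a; rewrite /w preP; case: asbP => // h; exfalso; apply: h; by exists a.
have winj : injective w.
  move=> y1 y2; rewrite /w.
  case: (asbP (exists a, u a = y1)) => [[a1 <-]|n1];
  case: (asbP (exists a, u a = y2)) => [[a2 <-]|n2]; rewrite ?preP.
  - case: (asbP (D a1)) => d1; case: (asbP (D a2)) => d2.
    + by move=> ->.
    + by move=> E; exfalso; apply: (eD (2 * a2)); rewrite -E.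
    + by move=> E; exfalso; apply: (eD (2 * a1)); rewrite E.
    + by move/ei => E; congr (u _); apply/eqP; rewrite -(eqn_pmul2l (isT : 0 < 2)) E.
  - case: (asbP (D a1)) => d1.
    + by move=> E; exfalso; apply: (eD (2 * y2 + 1)); rewrite -E.
    + move/ei => E; exfalso; move: (congr1 odd E).
      by rewrite oddD !oddM /=.
  - case: (asbP (D a2)) => d2.
    + by move=> E; exfalso; apply: (eD (2 * y1 + 1)); rewrite E.
    + move/ei => E; exfalso; move: (congr1 odd E).
      by rewrite oddD !oddM /=.
  - move/ei/eqP; rewrite eqn_add2r eqn_pmul2l //; by move/eqP.
exists (InjMap winj) => a /=; rewrite wu; split => h; case: asbP => //.
Qed.

Theorem lemma2p26 (X : EMsSet) (n : nat) (x : X n)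
  (hx : co_inf_supported x) (u : 'I_n.+1 -> injM) (k : 'I_n.+1)
  (A : subset_nat) (hA : co_infinite A)
  (hux : k_supported (em_act u x) k (image_set (u k) A)) :
  k_supported x k A.
Proof.
move=> g hg.
pose Bf i := proj1_sig (constructive_indefinite_description _ (hx i)).
have hB : forall i, co_infinite (Bf i) /\ k_supported x i (Bf i).
  move=> i; exact: (proj2_sig (constructive_indefinite_description _ (hx i))).
have Wi : forall i, exists w : injM,
    (forall a, Bf i a -> w (u i a) = a) /\ (forall a, A a -> A (w (u i a))).
  move=> i.
  case: (classic (inf (fun m => A m /\ ~ Bf i m))) => h1.
    have [w hw] := W_ex (u i) (@en_inj _ h1) (fun m => proj2 (en_T h1 m)).
    exists w; split => a Ba; first exact: (proj1 (hw a)).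
    case: (classic (Bf i a)) => hb; first by rewrite (proj1 (hw a)).
    by rewrite (proj2 (hw a)) //; exact: (proj1 (en_T h1 _)).
  have h2 : inf (fun m => ~ (A m \/ Bf i m)).
    move=> N; apply: NNPP => hn; apply: h1 => N'.
    have [m [hm nB]] := (proj1 (hB i)) (maxn N N').
    exists m; split; first by rewrite (leq_trans (leq_maxr N N') hm).
    split=> //; apply: NNPP => nA; apply: hn; exists m; split.
      exact: leq_trans (leq_maxl N N') hm.
    by case.
  have [w hw] := @W_ex (u i) (fun m => A m \/ Bf i m) _ (@en_inj _ h2) (fun m => en_T h2 m).
  exists w; split => a Ba.
    by rewrite (proj1 (hw a)) //; right.
  by rewrite (proj1 (hw a)) //; left.
pose w i := proj1_sig (constructive_indefinite_description _ (Wi i)).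
have hw : forall i, (forall a, Bf i a -> w i (u i a) = a) /\ (forall a, A a -> A (w i (u i a))).
  move=> i; exact: (proj2_sig (constructive_indefinite_description _ (Wi i))).
have Step1 : em_act w (em_act u x) = x.
  rewrite em_actM; apply: (@T1 _ _ x Bf) => i; first exact: (proj2 (hB i)).
  move=> a Ba /=; exact: (proj1 (hw i)).
pose W' i := if i == k then inj_one else w i.
transitivity (em_act (incl_k k g) (em_act w (em_act u x))); first by rewrite Step1.
transitivity (em_act W' (em_act (incl_k k (inj_mul g (w k))) (em_act u x))).
  rewrite !em_actM; apply: act_ext => i a /=; rewrite /incl_k /W'.
  by case: eqP => [->|] /=.
have agree : forall s, image_set (u k) A s -> inj_mul g (w k) s = w k s.
  move=> s [a Aa ->] /=; apply: hg; exact: (proj2 (hw k)).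
rewrite (L_lemma (image_coinf (u k) hA) hux agree).
rewrite -{2}Step1 em_actM; apply: act_ext => i a /=; rewrite /incl_k /W'.
by case: eqP => [->|] /=.
Qed.
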